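(* Assume the standing setting and that $\|R\|\rho^a<1$. Let $\vartheta:=-\lambda/|\lambda|$ and $\delta\in\,]0,\arccos(\|R\|\rho^a)[$. Then: (i) for every $p_0=(z_0,w_0)\in\tilde{\mathcal U}$, the searchlight beam $S(z_0,\vartheta,\delta)$ is a stability beam for $p_0$; (ii) for every integral curve of $\mathcal E^*X_R$ of the form $t\mapsto(z_0+t\theta,w(t))$ with $t\ge0$, $\theta\in\mathbb S^1$, $w(0)=w_0$, staying in $\tilde{\mathcal U}$, the following estimates hold. If $\operatorname{Re}\theta\neq0$, $$\Big|w(t)-w_0-t\frac\theta\lambda\Big|\le\frac{e^{a\operatorname{Re}z_0}}{|\lambda\operatorname{Re}\theta|\,a}\,\|R\|\,\big|1-e^{at\operatorname{Re}\theta}\big|,$$ and if $\operatorname{Re}\theta=0$, $$\Big|w(t)-w_0-t\frac\theta\lambda\Big|\le\frac{e^{a\operatorname{Re}z_0}}{|\lambda|}\,t\,\|R\|.$$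
   Context: Standing setting: $\lambda\in\mathbb C\setminus\{0\}$, $a$ is a positive integer, $R\in x^a\mathbb C\{x,y\}$, and $X_R=\lambda x\partial_x+(1+R)y\partial_y$. The polydisc $\mathcal U=\rho\mathbb D\times r\mathbb D$ is one on which $R$ is holomorphic and bounded with $\sup_{\mathcal U}|R|<1$, and $\|R\|:=\sup_{\mathcal U}|R/x^a|$. Write $\mathcal E(z,w)=(e^z,e^w)$ and $\tilde{\mathcal U}=\{\operatorname{Re}z<\ln\rho,\ \operatorname{Re}w<\ln r\}$. The field $\mathcal E^*X_R=\lambda\partial_z+(1+R\circ\mathcal E)\partial_w$ defines the foliation $\tilde{\mathcal F}$; $\tilde{\mathcal L}_p$ is its leaf through $p$, and $\Pi(z,w)=z$. For $v$ with $\operatorname{Re}v<\ln\rho$, $0<\delta<\pi$ and $\vartheta\in\mathbb S^1$, the searchlight beam is $S(v,\vartheta,\delta):=\{z:\operatorname{Re}z<\ln\rho,\ |\arg(z-v)-\arg\vartheta|<\delta\}$. When $v=\Pi(p_0)$, it is called a stability beam (for $p_0$) if the following holds: for every $\theta\in\mathbb S^1$ with $|\arg(\theta/\vartheta)|<\delta$, the lift in $\tilde{\mathcal L}_{p_0}$, starting at $p_0$, of the ray $t\ge0\mapsto v+t\theta$ has a $w$-coordinate whose real part is decreasing in $t$. In particular the ray lifts entirely in $\tilde{\mathcal L}_{p_0}$ as long as it stays in $\{\operatorname{Re}z<\ln\rho\}$. *)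

(* Defs.v *)
From Stdlib Require Import Reals Ratan.
Open Scope R_scope.

Record Cx := mkC { Cre : R; Cim : R }.

Definition C0 : Cx := mkC 0 0.
Definition C1 : Cx := mkC 1 0.
Definition RtoC (x : R) : Cx := mkC x 0.
Definition Cadd (u v : Cx) : Cx := mkC (Cre u + Cre v) (Cim u + Cim v).
Definition Copp (u : Cx) : Cx := mkC (- Cre u) (- Cim u).
Definition Csub (u v : Cx) : Cx := Cadd u (Copp v).
Definition Cmul (u v : Cx) : Cx :=
  mkC (Cre u * Cre v - Cim u * Cim v) (Cre u * Cim v + Cim u * Cre v).
Definition Cscale (k : R) (u : Cx) : Cx := mkC (k * Cre u) (k * Cim u).
Definition Cnorm (u : Cx) : R := sqrt (Cre u ^ 2 + Cim u ^ 2).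
Definition Cinv (u : Cx) : Cx :=
  mkC (Cre u / (Cre u ^ 2 + Cim u ^ 2)) (- Cim u / (Cre u ^ 2 + Cim u ^ 2)).
Definition Cdiv (u v : Cx) : Cx := Cmul u (Cinv v).
Fixpoint Cpow (u : Cx) (n : nat) : Cx :=
  match n with O => C1 | S m => Cmul u (Cpow u m) end.
Definition Cexp (z : Cx) : Cx := mkC (exp (Cre z) * cos (Cim z)) (exp (Cre z) * sin (Cim z)).

(* |arg u| < d  (principal argument), for 0 < d < PI *)
Definition arg_lt (u : Cx) (d : R) : Prop :=
  u <> C0 /\ exists phi, - d < phi < d /\ u = Cscale (Cnorm u) (mkC (cos phi) (sin phi)).

Definition Cdiff_at (f : Cx -> Cx) (z : Cx) : Prop :=
  exists L : Cx, forall eps, 0 < eps -> exists d, 0 < d /\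
    forall h, 0 < Cnorm h < d ->
      Cnorm (Csub (Csub (f (Cadd z h)) (f z)) (Cmul L h)) <= eps * Cnorm h.

Definition inU (rho r : R) (x y : Cx) : Prop := Cnorm x < rho /\ Cnorm y < r.

(* holomorphic on U (Osgood): jointly continuous and holomorphic in each variable *)
Definition holo_on_U (rho r : R) (F : Cx -> Cx -> Cx) : Prop :=
  forall x y, inU rho r x y ->
    Cdiff_at (fun u => F u y) x /\ Cdiff_at (fun v => F x v) y /\
    (forall eps, 0 < eps -> exists d, 0 < d /\ forall x' y',
        Cnorm (Csub x' x) < d -> Cnorm (Csub y' y) < d ->
        Cnorm (Csub (F x' y') (F x y)) < eps).

(* R in x^a Cx{x,y}, realised on the polydisc: R = x^a G with G holomorphic on U *)
Definition divisible_by_xa (rho r : R) (a : nat) (F : Cx -> Cx -> Cx) : Prop :=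
  exists G : Cx -> Cx -> Cx, holo_on_U rho r G /\
    forall x y, inU rho r x y -> F x y = Cmul (Cpow x a) (G x y).

Definition is_normR (rho r : R) (a : nat) (F : Cx -> Cx -> Cx) (N : R) : Prop :=
  is_lub (fun s => exists x y, inU rho r x y /\ x <> C0 /\
                      s = Cnorm (Cdiv (F x y) (Cpow x a))) N.

Definition inUt (rho r : R) (z w : Cx) : Prop := Cre z < ln rho /\ Cre w < ln r.

Definition Cderiv (w : R -> Cx) (t : R) (L : Cx) : Prop :=
  derivable_pt_lim (fun s => Cre (w s)) t (Cre L) /\
  derivable_pt_lim (fun s => Cim (w s)) t (Cim L).

(* t in [0,T] |-> (z0 + t theta, w t) is a curve in the leaf of the foliation
   defined by E^* X_R = lam d/dz + (1 + R o E) d/dw, starting at (z0, w0),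
   staying in tilde U: w is continuous on [0,T], w 0 = w0, and on (0,T)
   w'(t) = (theta/lam) (1 + R(e^{z0 + t theta}, e^{w(t)})). *)
Definition lift_on (lam : Cx) (F : Cx -> Cx -> Cx) (rho r : R)
    (z0 w0 theta : Cx) (w : R -> Cx) (T : R) : Prop :=
  0 <= T /\ w 0 = w0 /\
  (forall t, 0 <= t <= T -> inUt rho r (Cadd z0 (Cscale t theta)) (w t)) /\
  (forall t, 0 <= t <= T -> forall eps, 0 < eps -> exists d, 0 < d /\
     forall s, 0 <= s <= T -> Rabs (s - t) < d -> Cnorm (Csub (w s) (w t)) < eps) /\
  (forall t, 0 < t < T ->
     Cderiv w t (Cmul (Cdiv theta lam)
                   (Cadd C1 (F (Cexp (Cadd z0 (Cscale t theta))) (Cexp (w t)))))).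

Definition searchlight_beam (rho : R) (v vt : Cx) (delta : R) (z : Cx) : Prop :=
  Cre z < ln rho /\ arg_lt (Cdiv (Csub z v) vt) delta.

(* S(v, vt, delta) is a stability beam for p0 = (z0, w0), with v = Pi(p0) = z0:
   for every unit theta with |arg(theta/vt)| < delta, the lift of the ray
   t >= 0 |-> v + t theta starting at p0 exists as long as the ray stays in
   {Re z < ln rho}, and (every) such lift has strictly decreasing Re w. *)
Definition is_stability_beam (lam : Cx) (F : Cx -> Cx -> Cx) (rho r : R)
    (p0 : Cx * Cx) (v vt : Cx) (delta : R) : Prop :=
  v = fst p0 /\
  forall theta, Cnorm theta = 1 -> arg_lt (Cdiv theta vt) delta ->
    (exists w : R -> Cx, forall T, 0 <= T ->
        Cre (Cadd v (Cscale T theta)) < ln rho ->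
        lift_on lam F rho r v (snd p0) theta w T) /\
    (forall (w : R -> Cx) T, lift_on lam F rho r v (snd p0) theta w T ->
        forall s t, 0 <= s < t -> t <= T -> Cre (w t) < Cre (w s)).

(* Main.v *)
Require Import Defs.
From Stdlib Require Import Reals Ratan.
Open Scope R_scope.
From Stdlib Require Import Lra Lia.
From Coquelicot Require Coquelicot.
From HB Require Import structures.
From mathcomp Require all_ssreflect_compat all_algebra.
From mathcomp Require mathcomp_extra boolp classical_sets functions set_interval reals topology normedtype.
From mathcomp Require Rstruct Rstruct_topology.
Set Bullet Behavior "Strict Subproofs".
Open Scope R_scope.

Lemma Cnorm_ge0 u : 0 <= Cnorm u.
Proof. apply sqrt_pos. Qed.

Lemma Cnorm_sq u : Cnorm u * Cnorm u = Cre u ^ 2 + Cim u ^ 2.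
Proof. unfold Cnorm. apply sqrt_sqrt. nra. Qed.

Lemma Rabs_le_sqrt x y : Rabs x <= sqrt (x ^ 2 + y ^ 2).
Proof.
  rewrite <- sqrt_Rsqr_abs. apply sqrt_le_1_alt. unfold Rsqr. nra.
Qed.

Lemma Cre_le u : Rabs (Cre u) <= Cnorm u.
Proof. apply Rabs_le_sqrt. Qed.
Lemma Cim_le u : Rabs (Cim u) <= Cnorm u.
Proof. unfold Cnorm. rewrite Rplus_comm. apply Rabs_le_sqrt. Qed.

Lemma Cnorm_le_sum u : Cnorm u <= Rabs (Cre u) + Rabs (Cim u).
Proof.
  unfold Cnorm. rewrite <- (sqrt_Rsqr (Rabs (Cre u) + Rabs (Cim u))).
  2: { pose proof (Rabs_pos (Cre u)); pose proof (Rabs_pos (Cim u)); lra. }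
  apply sqrt_le_1_alt. unfold Rsqr.
  pose proof (Rabs_pos (Cre u)); pose proof (Rabs_pos (Cim u)).

  replace (Cre u ^ 2) with (Rabs (Cre u) * Rabs (Cre u)) by (rewrite <- Rabs_mult; rewrite Rabs_right; [ring | nra]).
  replace (Cim u ^ 2) with (Rabs (Cim u) * Rabs (Cim u)) by (rewrite <- Rabs_mult; rewrite Rabs_right; [ring | nra]).
  nra.
Qed.

Lemma Cnorm_mul u v : Cnorm (Cmul u v) = Cnorm u * Cnorm v.
Proof.
  unfold Cnorm, Cmul; cbn [Cre Cim]. rewrite <- sqrt_mult by nra. f_equal. ring.
Qed.

Lemma Cnorm_scale k u : Cnorm (Cscale k u) = Rabs k * Cnorm u.
Proof.
  unfold Cnorm, Cscale; cbn [Cre Cim]. rewrite <- sqrt_Rsqr_abs. rewrite <- sqrt_mult.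
  - f_equal. unfold Rsqr. ring.
  - apply Rle_0_sqr.
  - nra.
Qed.

Lemma Cnorm_exp z : Cnorm (Cexp z) = exp (Cre z).
Proof.
  unfold Cnorm, Cexp; cbn [Cre Cim].
  assert (E : (exp (Cre z) * cos (Cim z)) ^ 2 + (exp (Cre z) * sin (Cim z)) ^ 2
    = Rsqr (exp (Cre z))).
  { pose proof (sin2_cos2 (Cim z)). unfold Rsqr in *. nra. }
  rewrite E. apply sqrt_Rsqr. left; apply exp_pos.
Qed.

Lemma Cnorm_pow x n : Cnorm (Cpow x n) = Cnorm x ^ n.
Proof.
  induction n.
  - unfold Cnorm; cbn [Cpow Defs.C1 Cre Cim pow]. replace (1 * (1 * 1) + 0 * (0 * 1)) with 1 by ring. rewrite sqrt_1; ring.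
  - cbn [Cpow]. rewrite Cnorm_mul, IHn. reflexivity.
Qed.

Lemma Cnorm_eq0 u : Cnorm u = 0 -> u = C0.
Proof.
  intro H. pose proof (Cnorm_sq u) as H2. rewrite H in H2.
  destruct u as [p q]; simpl in *. unfold C0. f_equal; nra.
Qed.

Lemma Cnorm_pos u : u <> C0 -> 0 < Cnorm u.
Proof.
  intro H. destruct (Cnorm_ge0 u) as [h|h]; auto. exfalso; apply H, Cnorm_eq0; auto.
Qed.

Lemma Cnorm_inv u : u <> C0 -> Cnorm (Cinv u) = / Cnorm u.
Proof.
  intro H. pose proof (Cnorm_pos u H) as Hp. pose proof (Cnorm_sq u) as Hs.
  destruct u as [p q]; unfold Cnorm, Cinv in *; cbn [Cre Cim] in *.
  set (n := sqrt (p ^ 2 + q ^ 2)) in *.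
  assert (Hs2 : p ^ 2 + q ^ 2 <> 0) by nra.
  assert (E : (p / (p ^ 2 + q ^ 2)) ^ 2 + (- q / (p ^ 2 + q ^ 2)) ^ 2 = Rsqr (/ n)).
  { unfold Rsqr. rewrite <- Hs. assert (Hn : n <> 0) by lra.
    replace ((p / (n * n)) ^ 2 + (- q / (n * n)) ^ 2) with ((p ^ 2 + q ^ 2) / ((n * n) * (n * n))) by (field; auto).
    rewrite <- Hs. field; auto. }
  rewrite E. apply sqrt_Rsqr. left; apply Rinv_0_lt_compat; auto.
Qed.

Lemma Cnorm_div u v : v <> C0 -> Cnorm (Cdiv u v) = Cnorm u / Cnorm v.
Proof. intro H. unfold Cdiv. rewrite Cnorm_mul, Cnorm_inv by auto. reflexivity. Qed.

Lemma exp_INR_mul n x : exp (INR n * x) = exp x ^ n.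
Proof.
  induction n; cbn [Cre Cim].
  - rewrite Rmult_0_l. apply exp_0.
  - rewrite S_INR. replace ((INR n + 1) * x) with (x + INR n * x) by ring.
    rewrite exp_plus, IHn. reflexivity.
Qed.

Lemma CS a b x y : a * x + b * y <= sqrt (a ^ 2 + b ^ 2) * sqrt (x ^ 2 + y ^ 2).
Proof.
  rewrite <- sqrt_mult by nra.
  apply Rle_trans with (Rabs (a * x + b * y)); [apply Rle_abs|].
  rewrite <- sqrt_Rsqr_abs. apply sqrt_le_1_alt. unfold Rsqr.
  assert (0 <= (a * y - b * x) ^ 2) by (apply pow2_ge_0).
  assert (E: (a^2+b^2)*(x^2+y^2) - (a*x+b*y)*(a*x+b*y) = (a*y-b*x)^2) by ring. lra.
Qed.


Definition clamp (a b y : R) := Rmax a (Rmin b y).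

Lemma clamp_in a b y : a <= b -> a <= clamp a b y <= b.
Proof.
  intro H; unfold clamp. unfold Rmax, Rmin.
  destruct (Rle_dec b y); destruct (Rle_dec a _); lra.
Qed.

Lemma clamp_id a b y : a <= y <= b -> clamp a b y = y.
Proof.
  intro H; unfold clamp, Rmax, Rmin.
  destruct (Rle_dec b y); destruct (Rle_dec a _); lra.
Qed.

Lemma clamp_lip a b x y : a <= x <= b -> Rabs (clamp a b y - x) <= Rabs (y - x).
Proof.
  intro H; unfold clamp, Rmax, Rmin.
  destruct (Rle_dec b y); destruct (Rle_dec a _);
  unfold Rabs; repeat destruct Rcase_abs; lra.
Qed.

Lemma mvt_within (h dh : R -> R) a b : a <= b ->
  (forall x, a < x < b -> derivable_pt_lim h x (dh x)) ->
  (forall x, a <= x <= b -> forall eps, 0 < eps -> exists d, 0 < d /\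
      forall y, a <= y <= b -> Rabs (y - x) < d -> Rabs (h y - h x) < eps) ->
  exists c, a <= c <= b /\ h b - h a = dh c * (b - a).
Proof.
  intros Hab Hd Hc.
  destruct (Req_dec a b) as [E|Hne].
  { subst. exists b. split; [lra|ring]. }
  assert (Hlt : a < b) by lra.
  set (hc := fun x => h (clamp a b x)).
  destruct (Coquelicot.Derive.MVT_gen hc a b dh) as [c [Hc1 Hc2]].
  - rewrite Rmin_left, Rmax_right by lra. intros x Hx.
    apply Coquelicot.Derive.is_derive_Reals.
    intros eps Heps. destruct (Hd x Hx eps Heps) as [del Hdel].
    assert (Hp : 0 < Rmin del (Rmin (x - a) (b - x))).
    { apply Rmin_pos; [apply cond_pos| apply Rmin_pos; lra]. }
    exists (mkposreal _ Hp). intros h0 Hh0 Hh0'. simpl in Hh0'.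
    unfold hc. rewrite !clamp_id.
    + apply Hdel; auto. apply Rlt_le_trans with (1 := Hh0'). apply Rmin_l.
    + lra.
    + pose proof (Rmin_r del (Rmin (x - a) (b - x))).
      pose proof (Rmin_l (x - a) (b - x)). pose proof (Rmin_r (x - a) (b - x)).
      unfold Rabs in Hh0'; destruct Rcase_abs in Hh0'; lra.
  - rewrite Rmin_left, Rmax_right by lra. intros x Hx.
    unfold continuity_pt, continue_in, limit1_in, limit_in. intros eps Heps.
    destruct (Hc x Hx eps Heps) as [d [Hd0 Hd1]]. exists d. split; auto.
    intros y [_ Hy]. unfold R_dist in *. simpl in *. unfold R_dist in *.
    unfold hc. rewrite (clamp_id a b x) by lra.
    apply Hd1. apply clamp_in; lra.
    eapply Rle_lt_trans; [apply clamp_lip; lra| exact Hy].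
  - rewrite Rmin_left, Rmax_right in Hc1 by lra.
    exists c. split; auto. unfold hc in Hc2.
    rewrite !clamp_id in Hc2 by lra. exact Hc2.
Qed.


Definition pr (b : bool) (u : Cx) : R := if b then Cre u else Cim u.
Definition hs (n : nat) : R := / INR (S n).
Fixpoint ys (G : R -> Cx -> Cx) (w0 : Cx) (n k : nat) : Cx :=
  match k with
  | O => w0
  | S k' => Cadd (ys G w0 n k') (Cscale (hs n) (G (INR k' * hs n) (ys G w0 n k')))
  end.
Definition kn (n : nat) (t : R) : nat := (Z.to_nat (up (t * INR (S n))) - 1)%nat.
Definition phi G w0 n t := ys G w0 n (kn n t).

Lemma pr_add b u v : pr b (Cadd u v) = pr b u + pr b v.
Proof. destruct b; reflexivity. Qed.
Lemma pr_scale b k u : pr b (Cscale k u) = k * pr b u.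
Proof. destruct b; reflexivity. Qed.

Lemma hs_pos n : 0 < hs n.
Proof. unfold hs. apply Rinv_0_lt_compat, lt_0_INR. lia. Qed.

Lemma hs_small e : 0 < e -> exists N, forall n, (N <= n)%nat -> hs n < e.
Proof.
  intro He. destruct (INR_archimed e 1 He) as [N HN].
  exists N. intros n Hn. unfold hs.
  assert (0 < INR (S n)) by (apply lt_0_INR; lia).
  assert (INR N <= INR (S n)) by (apply le_INR; lia).
  apply Rmult_lt_reg_l with (INR (S n)); auto.
  rewrite Rinv_r by lra. nra.
Qed.

Lemma INR_to_nat z : (0 <= z)%Z -> INR (Z.to_nat z) = IZR z.
Proof. intro H. rewrite INR_IZR_INZ. f_equal. lia. Qed.

Lemma kn_spec n t : 0 <= t -> INR (kn n t) * hs n <= t /\ t < INR (kn n t) * hs n + hs n.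
Proof.
  intro Ht. unfold kn. set (x := t * INR (S n)).
  assert (HS : 0 < INR (S n)) by (apply lt_0_INR; lia).
  assert (Hx : 0 <= x) by (unfold x; nra).
  destruct (archimed x) as [A1 A2].
  assert (Hup : (1 <= up x)%Z).
  { apply le_IZR. assert (IZR (up x) > 0) by lra.
    assert (0 < up x)%Z by (apply lt_IZR; lra). apply IZR_le. lia. }
  rewrite minus_INR by lia.
  rewrite INR_to_nat by lia. change (INR 1) with 1.
  unfold hs. unfold x in *.
  assert (E : forall y, y * / INR (S n) * INR (S n) = y) by (intro; field; lra).
  split.
  - apply Rmult_le_reg_r with (INR (S n)); auto. rewrite E. lra.
  - apply Rmult_lt_reg_r with (INR (S n)); auto.
    replace (((IZR (up (t * INR (S n))) - 1) * / INR (S n) + / INR (S n)) * INR (S n))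
      with (IZR (up (t * INR (S n)))) by (field; lra). lra.
Qed.

Lemma kn_nonpos n t : t <= 0 -> kn n t = 0%nat.
Proof.
  intro Ht. unfold kn.
  assert (HS : 0 < INR (S n)) by (apply lt_0_INR; lia).
  destruct (archimed (t * INR (S n))) as [A1 A2].
  assert (IZR (up (t * INR (S n))) < 2) by nra.
  assert (up (t * INR (S n)) < 2)%Z by (apply lt_IZR; lra). lia.
Qed.

Lemma up_mono x y : x <= y -> (up x <= up y)%Z.
Proof.
  intro H. destruct (archimed x) as [A1 A2]. destruct (archimed y) as [B1 B2].
  destruct (Z.le_gt_cases (up x) (up y)) as [h|h]; auto.
  assert (H0 : (up y <= up x - 1)%Z) by lia.
  apply IZR_le in H0. rewrite minus_IZR in H0. simpl in H0. lra.
Qed.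

Lemma kn_mono n t s : t <= s -> (kn n t <= kn n s)%nat.
Proof.
  intro H. unfold kn.
  assert (HS : 0 < INR (S n)) by (apply lt_0_INR; lia).
  assert (t * INR (S n) <= s * INR (S n)) by nra.
  pose proof (up_mono _ _ H0). lia.
Qed.

Lemma kn_abs n t : INR (kn n t) * hs n <= Rabs t.
Proof.
  destruct (Rle_dec 0 t).
  - rewrite Rabs_right by lra. apply kn_spec; auto.
  - rewrite kn_nonpos by lra. simpl. rewrite Rmult_0_l. apply Rabs_pos.
Qed.

Lemma ys_dev G w0 b n i d c eps :
  (forall k, (i <= k < i + d)%nat -> Rabs (pr b (G (INR k * hs n) (ys G w0 n k)) - c) <= eps) ->
  Rabs (pr b (ys G w0 n (i + d)) - pr b (ys G w0 n i) - INR d * hs n * c) <= INR d * hs n * eps.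
Proof.
  induction d; intro H.
  - rewrite Nat.add_0_r. simpl INR. replace (pr b (ys G w0 n i) - pr b (ys G w0 n i) - 0 * hs n * c) with 0 by ring.
    rewrite Rabs_R0. lra.
  - rewrite Nat.add_succ_r. cbn [ys]. rewrite pr_add, pr_scale.
    assert (IH : Rabs (pr b (ys G w0 n (i + d)) - pr b (ys G w0 n i) - INR d * hs n * c) <= INR d * hs n * eps).
    { apply IHd. intros k Hk. apply H. lia. }
    assert (Hk : Rabs (pr b (G (INR (i + d) * hs n) (ys G w0 n (i + d))) - c) <= eps) by (apply H; lia).
    pose proof (hs_pos n).
    replace (pr b (ys G w0 n (i + d)) + hs n * pr b (G (INR (i + d) * hs n) (ys G w0 n (i + d))) -
      pr b (ys G w0 n i) - INR (S d) * hs n * c)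
      with ((pr b (ys G w0 n (i + d)) - pr b (ys G w0 n i) - INR d * hs n * c)
            + hs n * (pr b (G (INR (i + d) * hs n) (ys G w0 n (i + d))) - c)) by (rewrite S_INR; ring).
    eapply Rle_trans; [apply Rabs_triang|]. rewrite Rabs_mult, (Rabs_right (hs n)) by lra.
    rewrite S_INR. nra.
Qed.

Lemma ys_lip G w0 K b n i d :
  (forall b t y, Rabs (pr b (G t y)) <= K) ->
  Rabs (pr b (ys G w0 n (i + d)) - pr b (ys G w0 n i)) <= INR d * hs n * K.
Proof.
  intro HK. pose proof (ys_dev G w0 b n i d 0 K) as H.
  rewrite Rmult_0_r, Rminus_0_r in H. apply H. intros k _. rewrite Rminus_0_r. apply HK.
Qed.

Lemma ys_re_le G w0 n k : (forall t y, Cre (G t y) <= 0) -> Cre (ys G w0 n k) <= Cre w0.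
Proof.
  intro H. induction k; cbn [ys]. lra.
  cbn [Cadd Cscale Cre]. pose proof (hs_pos n). pose proof (H (INR k * hs n) (ys G w0 n k)). nra.
Qed.

Lemma seg_len n u v : 0 <= u <= v ->
  INR (kn n v - kn n u) * hs n <= v - u + hs n /\
  Rabs (INR (kn n v - kn n u) * hs n - (v - u)) <= hs n.
Proof.
  intro H. pose proof (kn_mono n u v (proj2 H)).
  rewrite minus_INR by auto.
  destruct (kn_spec n u) as [U1 U2]; [lra|]. destruct (kn_spec n v) as [V1 V2]; [lra|].
  split. lra. apply Rabs_le. lra.
Qed.

Lemma seg_sum G w0 K b n u v c eps : 0 <= u <= v -> 0 <= eps -> Rabs c <= K ->
  (forall k, (kn n u <= k < kn n v)%nat -> Rabs (pr b (G (INR k * hs n) (ys G w0 n k)) - c) <= eps) ->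
  Rabs (pr b (phi G w0 n v) - pr b (phi G w0 n u) - (v - u) * c) <= (v - u + hs n) * eps + hs n * K.
Proof.
  intros Huv He Hc H. unfold phi.
  pose proof (kn_mono n u v (proj2 Huv)) as Hm.
  set (d := (kn n v - kn n u)%nat).
  assert (Ed : kn n v = (kn n u + d)%nat) by (unfold d; lia).
  pose proof (ys_dev G w0 b n (kn n u) d c eps) as D.
  rewrite <- Ed in D. specialize (D ltac:(intros k Hk; apply H; lia)).
  destruct (seg_len n u v Huv) as [L1 L2]. fold d in L1, L2.
  replace (pr b (ys G w0 n (kn n v)) - pr b (ys G w0 n (kn n u)) - (v - u) * c)
    with ((pr b (ys G w0 n (kn n v)) - pr b (ys G w0 n (kn n u)) - INR d * hs n * c)
          + (INR d * hs n - (v - u)) * c) by ring.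
  eapply Rle_trans; [apply Rabs_triang|]. rewrite Rabs_mult.
  pose proof (Rabs_pos c). pose proof (Rabs_pos (INR d * hs n - (v - u))).
  pose proof (hs_pos n). pose proof (pos_INR d).
  assert (INR d * hs n * eps <= (v - u + hs n) * eps) by (apply Rmult_le_compat_r; auto).
  assert (Rabs (INR d * hs n - (v - u)) * Rabs c <= hs n * K) by (apply Rmult_le_compat; auto).
  lra.
Qed.

Lemma seg_nodes G w0 K b n u v k : (forall b t y, Rabs (pr b (G t y)) <= K) -> 0 <= K ->
  0 <= u <= v -> (kn n u <= k < kn n v)%nat ->
  Rabs (INR k * hs n - u) <= v - u + hs n /\ Rabs (INR k * hs n - v) <= v - u + hs n /\
  Rabs (pr b (ys G w0 n k) - pr b (phi G w0 n u)) <= K * (v - u + hs n) /\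
  Rabs (pr b (ys G w0 n k) - pr b (phi G w0 n v)) <= K * (v - u + hs n).
Proof.
  intros HK K0 Huv Hk.
  destruct (kn_spec n u) as [U1 U2]; [lra|]. destruct (kn_spec n v) as [V1 V2]; [lra|].
  pose proof (hs_pos n).
  assert (I1 : INR (kn n u) <= INR k) by (apply le_INR; lia).
  assert (I2 : INR k + 1 <= INR (kn n v)) by (rewrite <- S_INR; apply le_INR; lia).
  assert (T1 : INR (kn n u) * hs n <= INR k * hs n) by (apply Rmult_le_compat_r; lra).
  assert (T2 : INR k * hs n + hs n <= INR (kn n v) * hs n) by nra.
  destruct (seg_len n u v Huv) as [L1 L2].
  assert (M1 : INR (k - kn n u) * hs n <= v - u + hs n).
  { eapply Rle_trans; [|apply L1]. apply Rmult_le_compat_r; [lra|]. apply le_INR; lia. }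
  assert (M2 : INR (kn n v - k) * hs n <= v - u + hs n).
  { eapply Rle_trans; [|apply L1]. apply Rmult_le_compat_r; [lra|]. apply le_INR; lia. }
  split; [apply Rabs_le; lra|]. split; [apply Rabs_le; lra|]. split.
  - unfold phi. pose proof (ys_lip G w0 K b n (kn n u) (k - kn n u) HK) as Y.
    replace (kn n u + (k - kn n u))%nat with k in Y by lia.
    eapply Rle_trans; [apply Y|]. rewrite Rmult_comm. apply Rmult_le_compat_l; auto.
  - unfold phi. pose proof (ys_lip G w0 K b n k (kn n v - k) HK) as Y.
    replace (k + (kn n v - k))%nat with (kn n v) in Y by lia.
    rewrite Rabs_minus_sym. eapply Rle_trans; [apply Y|]. rewrite Rmult_comm. apply Rmult_le_compat_l; auto.
Qed.

Module Clu.
Set Bullet Behavior "None".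
Import HB.structures.
Import all_ssreflect_compat all_algebra.
Import mathcomp_extra boolp classical_sets functions set_interval reals topology normedtype.
Import Rstruct Rstruct_topology.
Import Order.TTheory GRing.Theory Num.Theory.
Import numFieldNormedType.Exports.
Local Open Scope classical_set_scope.
Local Open Scope ring_scope.
Import ArrowAsProduct.

Lemma cluster_pt4 (phi : nat -> (R * bool)%type -> R) (lo hi : (R * bool)%type -> R) :
  (forall n i, Rle (lo i) (phi n i) /\ Rle (phi n i) (hi i)) ->
  exists f : (R*bool)%type -> R, forall i j k l (e : R) (N : nat), Rlt 0 e ->
    exists n, (N <= n)%coq_nat /\ Rlt (Rabs (Rminus (phi n i) (f i))) e /\ Rlt (Rabs (Rminus (phi n j) (f j))) e /\ Rlt (Rabs (Rminus (phi n k) (f k))) e /\ Rlt (Rabs (Rminus (phi n l) (f l))) e.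
Proof.
move=> Hb.
have cpt := @tychonoff _ (fun _ : (R*bool)%type => R) (fun i => `[lo i, hi i]%classic) (fun i => @segment_compact R (lo i) (hi i)).
have [|f [_ cf]] := cpt (phi @ \oo) (fmap_proper_filter _ eventually_filter).
  exists 0%N => // n _ i /=; rewrite in_itv /=; apply/andP; split; apply/RleP; apply Hb.

exists f => i j k l e N e0.
have Fa : (phi @ \oo) (phi @` [set n | (N <= n)%N]).
  exists N => // n /= Nn; by exists n.
have nb : nbhs f ((proj i @^-1` ball (f i) e `&` proj j @^-1` ball (f j) e) `&` (proj k @^-1` ball (f k) e `&` proj l @^-1` ball (f l) e)).
  apply: filterI; apply: filterI.
  - apply: (@proj_continuous _ (fun=> R) i f); apply: nbhsx_ballx; exact/RltP.
  - apply: (@proj_continuous _ (fun=> R) j f); apply: nbhsx_ballx; exact/RltP.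
  - apply: (@proj_continuous _ (fun=> R) k f); apply: nbhsx_ballx; exact/RltP.
  - apply: (@proj_continuous _ (fun=> R) l f); apply: nbhsx_ballx; exact/RltP.
have [g [[n Nn <-] [[bi bj] [bk bl]]]] := cf _ _ Fa nb.
exists n; split; first by apply/ssrnat.leP.
move: bi bj bk bl; rewrite /ball /= /proj /= => bi bj bk bl.
by split; [|split; [|split]]; rewrite Rabs_minus_sym; apply/RltP.
Qed.
End Clu.
Set Bullet Behavior "Strict Subproofs".


Definition LocCont (G : R -> Cx -> Cx) (t : R) (y : Cx) : Prop :=
  forall eps, 0 < eps -> exists d, 0 < d /\ forall s y', Rabs (s - t) < d ->
    (forall b, Rabs (pr b y' - pr b y) < d) ->
    forall b, Rabs (pr b (G s y') - pr b (G t y)) <= eps.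

Lemma abs3 a b c : Rabs (a - b + c) <= Rabs a + Rabs b + Rabs c.
Proof.
  eapply Rle_trans; [apply Rabs_triang|]. unfold Rminus.
  pose proof (Rabs_triang a (- b)). rewrite Rabs_Ropp in H. lra.
Qed.

Lemma le_eps_C x y C : 0 <= C -> (forall e, 0 < e -> x <= y + C * e) -> x <= y.
Proof.
  intros HC H. destruct (Rle_dec x y) as [h|h]; auto. exfalso.
  set (e := (x - y) / (C + 1)).
  assert (He : 0 < e) by (unfold e; apply Rdiv_lt_0_compat; lra).
  specialize (H e He).
  assert (C * e < x - y).
  { unfold e. apply Rmult_lt_reg_r with (C + 1); [lra|].
    replace (C * ((x - y) / (C + 1)) * (C + 1)) with (C * (x - y)) by (field; lra). nra. }
  lra.
Qed.

Lemma eq_eps x y : (forall e, 0 < e -> Rabs (x - y) < e) -> x = y.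
Proof.
  intro H. destruct (Req_dec x y) as [h|h]; auto. exfalso.
  assert (0 < Rabs (x - y)) by (apply Rabs_pos_lt; lra).
  specialize (H _ H0). lra.
Qed.

Lemma seg_loc G w0 K n u v x y d1 eps :
  (forall b t y, Rabs (pr b (G t y)) <= K) -> 0 <= K -> 0 <= u <= v -> (x = u \/ x = v) ->
  v - u + hs n <= d1 / (2 * (K + 1)) -> 0 < d1 ->
  (forall b', Rabs (pr b' (phi G w0 n x) - pr b' y) < d1 / 4) ->
  (forall s y', Rabs (s - x) < d1 -> (forall b, Rabs (pr b y' - pr b y) < d1) ->
     forall b, Rabs (pr b (G s y') - pr b (G x y)) <= eps) -> 0 <= eps ->
  forall b, Rabs (pr b (phi G w0 n v) - pr b (phi G w0 n u) - (v - u) * pr b (G x y))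
     <= (v - u + hs n) * eps + hs n * K.
Proof.
  intros HK K0 Huv Hx Hsm Hd1 Hclose HP He b.
  apply seg_sum; auto.
  intros k Hk. apply HP.
  - destruct (seg_nodes G w0 K true n u v k HK K0 Huv Hk) as [A1 [A2 _]].
    assert (d1 / (2 * (K + 1)) < d1).
    { apply Rmult_lt_reg_r with (2 * (K + 1)); [lra|].
      replace (d1 / (2 * (K + 1)) * (2 * (K + 1))) with d1 by (field; lra). nra. }
    destruct Hx; subst; lra.
  - intro b'. destruct (seg_nodes G w0 K b' n u v k HK K0 Huv Hk) as [_ [_ [A3 A4]]].
    specialize (Hclose b').
    assert (K * (v - u + hs n) <= d1 / 2).
    { apply Rle_trans with (K * (d1 / (2 * (K + 1)))).
      apply Rmult_le_compat_l; auto.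
      apply Rmult_le_reg_r with (2 * (K + 1)); [lra|].
      replace (K * (d1 / (2 * (K + 1))) * (2 * (K + 1))) with (K * d1) by (field; lra). nra. }
    replace (pr b' (ys G w0 n k) - pr b' y) with
      ((pr b' (ys G w0 n k) - pr b' (phi G w0 n x)) + (pr b' (phi G w0 n x) - pr b' y)) by ring.
    eapply Rle_lt_trans; [apply Rabs_triang|].
    destruct Hx; subst; lra.
Qed.

Lemma euler_exists G K w0 : 0 <= K ->
  (forall b t y, Rabs (pr b (G t y)) <= K) -> (forall t y, Cre (G t y) <= 0) ->
  exists w : R -> Cx, w 0 = w0 /\ (forall t, Cre (w t) <= Cre w0) /\
    (forall b s t, 0 <= t <= s -> Rabs (pr b (w s) - pr b (w t)) <= K * (s - t)) /\
    (forall t, 0 < t -> LocCont G t (w t) ->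
       forall b, derivable_pt_lim (fun s => pr b (w s)) t (pr b (G t (w t)))).
Proof.
  intros K0 HK HRe.
  destruct (Clu.cluster_pt4 (fun n i => pr (snd i) (phi G w0 n (fst i)))
     (fun i => pr (snd i) w0 - K * Rabs (fst i)) (fun i => pr (snd i) w0 + K * Rabs (fst i)))
     as [f Hf].
  { intros n [t b]. simpl. unfold phi.
    pose proof (ys_lip G w0 K b n 0 (kn n t) HK) as Y. simpl in Y.
    pose proof (kn_abs n t). pose proof (hs_pos n).
    assert (INR (kn n t) * hs n * K <= K * Rabs t) by (rewrite Rmult_comm; apply Rmult_le_compat_l; auto).
    simpl ys in Y. unfold Rabs in Y; destruct Rcase_abs in Y; split; lra. }
  set (w := fun t => mkC (f (t, true)) (f (t, false))).
  assert (Hw : forall b t, pr b (w t) = f (t, b)) by (intros [|] t; reflexivity).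
  assert (CL : forall t s e N, 0 < e -> exists n, (N <= n)%nat /\ forall b,
      Rabs (pr b (phi G w0 n t) - pr b (w t)) < e /\ Rabs (pr b (phi G w0 n s) - pr b (w s)) < e).
  { intros t s e N He. destruct (Hf (t, true) (t, false) (s, true) (s, false) e N He)
      as [n [Hn [A1 [A2 [A3 A4]]]]]. exists n. split; auto.
    intros [|]; rewrite Hw; simpl in *; auto. }
  exists w. split; [|split; [|split]].
  -
    assert (E : forall b, pr b (w 0) = pr b w0).
    { intro b. symmetry. apply eq_eps. intros e He.
      destruct (CL 0 0 e 0%nat He) as [n [_ Hn]]. destruct (Hn b) as [H1 _].
      unfold phi in H1. rewrite kn_nonpos in H1 by lra. simpl in H1. exact H1. }
    destruct w0 as [p q]. unfold w. f_equal; [apply (E true) | apply (E false)].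
  - intro t. apply (le_eps_C _ _ 1); [lra|]. intros e He.
    destruct (CL t t e 0%nat He) as [n [_ Hn]]. destruct (Hn true) as [H1 _]. simpl in H1.
    pose proof (ys_re_le G w0 n (kn n t) HRe). unfold phi in H1.
    apply Rabs_def2 in H1. destruct H1. unfold w in *; cbn [Cre Cim pr] in *; lra.
  - intros b s t Hts. apply (le_eps_C _ _ (2 + K)); [lra|]. intros e He.
    destruct (hs_small e He) as [N HN].
    destruct (CL t s e N He) as [n [Hn Hb]]. destruct (Hb b) as [H1 H2].
    specialize (HN n Hn).
    assert (L : Rabs (pr b (phi G w0 n s) - pr b (phi G w0 n t)) <= K * (s - t + hs n)).
    { unfold phi. pose proof (kn_mono n t s (proj2 Hts)).
      pose proof (ys_lip G w0 K b n (kn n t) (kn n s - kn n t) HK) as Y.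
      replace (kn n t + (kn n s - kn n t))%nat with (kn n s) in Y by lia.
      destruct (seg_len n t s) as [L1 _]; [lra|].
      eapply Rle_trans; [apply Y|]. rewrite Rmult_comm. apply Rmult_le_compat_l; auto. }
    replace (pr b (w s) - pr b (w t)) with
      ((pr b (phi G w0 n s) - pr b (phi G w0 n t)) - (pr b (phi G w0 n s) - pr b (w s))
        + (pr b (phi G w0 n t) - pr b (w t))) by ring.
    eapply Rle_trans; [apply abs3|].
    assert (K * hs n <= K * e) by (apply Rmult_le_compat_l; lra). nra.
  - intros t Ht HLC b eps Heps.
    set (c := pr b (G t (w t))).
    destruct (HLC (eps / 2)) as [d1 [Hd1 HP]]; [lra|].
    set (eta := d1 / (4 * (K + 1))).
    assert (Heta : 0 < eta) by (unfold eta; apply Rdiv_lt_0_compat; lra).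
    assert (E2eta : 2 * eta = d1 / (2 * (K + 1))) by (unfold eta; field; lra).
    assert (Hdel : 0 < Rmin t eta) by (apply Rmin_pos; lra).
    exists (mkposreal _ Hdel). intros h Hh0 Hh. simpl in Hh.
    assert (Hht : Rabs h < t) by (eapply Rlt_le_trans; [apply Hh| apply Rmin_l]).
    assert (Hhe : Rabs h < eta) by (eapply Rlt_le_trans; [apply Hh| apply Rmin_r]).
    assert (Habs : 0 < Rabs h) by (apply Rabs_pos_lt; auto).
    destruct (Rabs_def2 _ _ Hhe) as [Hh2 Hh3]. destruct (Rabs_def2 _ _ Hht) as [Hh4 Hh5].
    assert (Hc : Rabs c <= K) by apply HK.
    assert (Claim : Rabs (pr b (w (t + h)) - pr b (w t) - h * c) <= Rabs h * (eps / 2)).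
    { apply (le_eps_C _ _ (eps / 2 + K + 2)); [lra|]. intros e He.
      destruct (hs_small (Rmin e eta)) as [N HN]; [apply Rmin_pos; lra|].
      assert (He' : 0 < Rmin e (d1 / 4)) by (apply Rmin_pos; lra).
      destruct (CL t (t + h) _ N He') as [n [Hn Hb]].
      specialize (HN n Hn).
      assert (Hhs1 : hs n < e) by (eapply Rlt_le_trans; [apply HN| apply Rmin_l]).
      assert (Hhs2 : hs n < eta) by (eapply Rlt_le_trans; [apply HN| apply Rmin_r]).
      assert (Hcl : forall b', Rabs (pr b' (phi G w0 n t) - pr b' (w t)) < d1 / 4).
      { intro b'. destruct (Hb b') as [H1 _]. eapply Rlt_le_trans; [apply H1| apply Rmin_r]. }
      assert (Hphi : Rabs (pr b (phi G w0 n (t + h)) - pr b (phi G w0 n t) - h * c)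
                     <= (Rabs h + hs n) * (eps / 2) + hs n * K).
      { pose proof (Rabs_pos h).
        destruct (Rle_dec 0 h).
        - rewrite (Rabs_right h) by lra.
          assert (S := seg_loc G w0 K n t (t + h) t (w t) d1 (eps / 2) HK K0 ltac:(lra)
             (or_introl eq_refl) ltac:(lra) Hd1 Hcl HP ltac:(lra) b).
          replace (t + h - t) with h in S by ring. exact S.
        - rewrite (Rabs_left h) by lra.
          assert (S := seg_loc G w0 K n (t + h) t t (w t) d1 (eps / 2) HK K0 ltac:(lra)
             (or_intror eq_refl) ltac:(lra) Hd1 Hcl HP ltac:(lra) b).
          replace (t - (t + h)) with (- h) in S by ring.
          replace (pr b (phi G w0 n (t + h)) - pr b (phi G w0 n t) - h * c)
            with (- (pr b (phi G w0 n t) - pr b (phi G w0 n (t + h)) - (- h) * c)) by ring.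
          rewrite Rabs_Ropp. exact S. }
      destruct (Hb b) as [H1 H2].
      assert (Rabs (pr b (phi G w0 n t) - pr b (w t)) < e) by (eapply Rlt_le_trans; [apply H1| apply Rmin_l]).
      assert (Rabs (pr b (phi G w0 n (t + h)) - pr b (w (t + h))) < e) by (eapply Rlt_le_trans; [apply H2| apply Rmin_l]).
      replace (pr b (w (t + h)) - pr b (w t) - h * c) with
        ((pr b (phi G w0 n (t + h)) - pr b (phi G w0 n t) - h * c)
         - (pr b (phi G w0 n (t + h)) - pr b (w (t + h))) + (pr b (phi G w0 n t) - pr b (w t))) by ring.
      eapply Rle_trans; [apply abs3|].
      assert (hs n * (eps / 2) <= e * (eps / 2)) by (apply Rmult_le_compat_r; lra).
      assert (hs n * K <= e * K) by (apply Rmult_le_compat_r; lra).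
      nra. }
    fold c.
    replace ((pr b (w (t + h)) - pr b (w t)) / h - c) with
      ((pr b (w (t + h)) - pr b (w t) - h * c) / h) by (field; auto).
    unfold Rdiv. rewrite Rabs_mult, Rabs_inv.
    apply Rmult_lt_reg_r with (Rabs h); auto.
    rewrite Rmult_assoc, Rinv_l by lra. nra.
Qed.


Module Der.
Import Coquelicot.Coquelicot.
Lemma dB1 (A k x : R) : k <> 0 ->
  derivable_pt_lim (fun s => A * ((exp (k * s) - 1) / k)) x (A * exp (k * x)).
Proof. intro Hk. apply is_derive_Reals. auto_derive. auto. field. auto. Qed.
Lemma dB0 (A x : R) : derivable_pt_lim (fun s => A * s) x A.
Proof. apply is_derive_Reals. auto_derive. auto. ring. Qed.
End Der.

Lemma d_comb f1 f2 B x l1 l2 lb e1 e2 m :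
  derivable_pt_lim f1 x l1 -> derivable_pt_lim f2 x l2 -> derivable_pt_lim B x lb ->
  derivable_pt_lim (fun s => e1 * f1 s + e2 * f2 s - m * B s) x (e1 * l1 + e2 * l2 - m * lb).
Proof.
  intros H1 H2 H3.
  apply (derivable_pt_lim_minus (fun s => e1 * f1 s + e2 * f2 s) (fun s => m * B s)).
  - apply (derivable_pt_lim_plus (fun s => e1 * f1 s) (fun s => e2 * f2 s)).
    + exact (derivable_pt_lim_scal f1 e1 x l1 H1).
    + exact (derivable_pt_lim_scal f2 e2 x l2 H2).
  - exact (derivable_pt_lim_scal B m x lb H3).
Qed.

Lemma cont_eps f x l : derivable_pt_lim f x l ->
  forall eps, 0 < eps -> exists d, 0 < d /\ forall y, Rabs (y - x) < d -> Rabs (f y - f x) < eps.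
Proof.
  intros H eps Heps.
  pose proof (derivable_continuous_pt f x (exist _ l H)) as C.
  unfold continuity_pt, continue_in, limit1_in, limit_in in C.
  destruct (C eps Heps) as [d [Hd Hd']]. exists d. split; auto.
  intros y Hy. destruct (Req_dec y x) as [E|E].
  - subst. rewrite Rminus_diag, Rabs_R0. auto.
  - apply Hd'. split; [split; [exact I| auto]| exact Hy].
Qed.

Lemma vec_bound (D Dd : R -> Cx) (B b : R -> R) t :
  0 <= t -> D 0 = C0 -> B 0 = 0 -> 0 <= B t ->
  (forall s, 0 < s < t -> Cderiv D s (Dd s)) ->
  (forall s, 0 <= s <= t -> forall eps, 0 < eps -> exists d, 0 < d /\
      forall y, 0 <= y <= t -> Rabs (y - s) < d -> Cnorm (Csub (D y) (D s)) < eps) ->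
  (forall s, derivable_pt_lim B s (b s)) ->
  (forall s, 0 <= s <= t -> Cnorm (Dd s) <= b s) ->
  Cnorm (D t) <= B t.
Proof.
  intros Ht D0 B0 Bt HD HC HB Hb.
  set (e1 := Cre (D t)). set (e2 := Cim (D t)). set (m := Cnorm (D t)).
  set (h := fun s => e1 * Cre (D s) + e2 * Cim (D s) - m * B s).
  destruct (mvt_within h (fun s => e1 * Cre (Dd s) + e2 * Cim (Dd s) - m * b s) 0 t Ht)
    as [c [Hc Hmvt]].
  - intros x Hx. destruct (HD x Hx) as [H1 H2]. unfold h. apply d_comb; auto.
  - intros x Hx eps Heps.
    assert (Hm0 : 0 <= m) by apply Cnorm_ge0.
    set (M := Rabs e1 + Rabs e2 + m + 1).
    assert (HM : 0 < M) by (unfold M; pose proof (Rabs_pos e1); pose proof (Rabs_pos e2); lra).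
    set (eta := eps / M).
    assert (Heta : 0 < eta) by (unfold eta; apply Rdiv_lt_0_compat; lra).
    assert (EM : M * eta = eps) by (unfold eta; field; lra).
    destruct (cont_eps B x (b x) (HB x) eta Heta) as [d1 [Hd1 Hd1']].
    destruct (HC x Hx eta Heta) as [d2 [Hd2 Hd2']].
    exists (Rmin d1 d2). split; [apply Rmin_pos; auto|]. intros y Hy Hyx.
    assert (Y1 := Hd1' y ltac:(eapply Rlt_le_trans; [apply Hyx| apply Rmin_l])).
    assert (Y2 := Hd2' y Hy ltac:(eapply Rlt_le_trans; [apply Hyx| apply Rmin_r])).
    unfold h.
    set (u := Csub (D y) (D x)).
    assert (U1 : Rabs (Cre (D y) - Cre (D x)) < eta).
    { replace (Cre (D y) - Cre (D x)) with (Cre u) by (unfold u; simpl; ring).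
      eapply Rle_lt_trans; [apply Cre_le|apply Y2]. }
    assert (U2 : Rabs (Cim (D y) - Cim (D x)) < eta).
    { replace (Cim (D y) - Cim (D x)) with (Cim u) by (unfold u; simpl; ring).
      eapply Rle_lt_trans; [apply Cim_le|apply Y2]. }
    replace (e1 * Cre (D y) + e2 * Cim (D y) - m * B y - (e1 * Cre (D x) + e2 * Cim (D x) - m * B x))
      with (e1 * (Cre (D y) - Cre (D x)) + e2 * (Cim (D y) - Cim (D x)) - m * (B y - B x)) by ring.
    assert (A1 : Rabs (e1 * (Cre (D y) - Cre (D x))) <= Rabs e1 * eta).
    { rewrite Rabs_mult. apply Rmult_le_compat_l; [apply Rabs_pos| lra]. }
    assert (A2 : Rabs (e2 * (Cim (D y) - Cim (D x))) <= Rabs e2 * eta).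
    { rewrite Rabs_mult. apply Rmult_le_compat_l; [apply Rabs_pos| lra]. }
    assert (A3 : Rabs (m * (B y - B x)) <= m * eta).
    { rewrite Rabs_mult, (Rabs_right m) by lra. apply Rmult_le_compat_l; lra. }
    eapply Rle_lt_trans; [apply Rabs_triang|]. rewrite Rabs_Ropp.
    eapply Rle_lt_trans; [apply Rplus_le_compat_r, Rabs_triang|].
    unfold M in EM. nra.
  - assert (Hm0 : 0 <= m) by apply Cnorm_ge0.
    assert (Hdc : e1 * Cre (Dd c) + e2 * Cim (Dd c) - m * b c <= 0).
    { pose proof (CS e1 e2 (Cre (Dd c)) (Cim (Dd c))) as HCS.
      fold (Cnorm (Dd c)) in HCS. unfold e1, e2 in HCS. fold (Cnorm (D t)) in HCS. fold m in HCS.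
      pose proof (Hb c Hc). assert (m * Cnorm (Dd c) <= m * b c) by (apply Rmult_le_compat_l; auto).
      unfold e1, e2. lra. }
    assert (Hh : h t <= h 0).
    { assert (dh_t : (e1 * Cre (Dd c) + e2 * Cim (Dd c) - m * b c) * (t - 0) <= 0).
      { replace (t - 0) with t by ring. nra. }
      lra. }
    unfold h in Hh. rewrite D0, B0 in Hh. cbn [Cre Cim C0] in Hh.
    assert (Em : e1 * Cre (D t) + e2 * Cim (D t) = m * m).
    { unfold e1, e2, m. rewrite Cnorm_sq. ring. }
    rewrite Em in Hh.
    destruct Hm0 as [Hm|Hm].
    + apply Rmult_le_reg_l with m; auto. lra.
    + fold m. rewrite <- Hm. exact Bt.
Qed.



Lemma Cnorm_real x : Cnorm (mkC x 0) = Rabs x.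
Proof.
  unfold Cnorm; cbn [Cre Cim]. rewrite <- sqrt_Rsqr_abs. f_equal. unfold Rsqr. ring.
Qed.

Lemma N_nonneg rho r a F N : 0 < rho -> 0 < r -> is_normR rho r a F N -> 0 <= N.
Proof.
  intros Hrho Hr [Hub _].
  set (x0 := mkC (rho / 2) 0).
  apply Rle_trans with (Cnorm (Cdiv (F x0 C0) (Cpow x0 a))); [apply Cnorm_ge0|].
  apply Hub. exists x0, C0. split; [|split; [|reflexivity]].
  - unfold inU, x0. rewrite Cnorm_real. unfold C0. rewrite Cnorm_real.
    rewrite !Rabs_right by lra. lra.
  - unfold x0, C0. intro E. injection E. lra.
Qed.

Lemma boundF rho r a F N : (1 <= a)%nat -> divisible_by_xa rho r a F -> is_normR rho r a F N ->
  forall x y, inU rho r x y -> Cnorm (F x y) <= N * Cnorm x ^ a.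
Proof.
  intros Ha [G [_ HG]] [Hub _] x y Hxy.
  destruct (Req_dec (Cnorm x) 0) as [E|E].
  - apply Cnorm_eq0 in E. subst x. rewrite (HG _ _ Hxy), Cnorm_mul, Cnorm_pow.
    unfold C0 at 1. rewrite Cnorm_real, Rabs_R0, pow_i by lia.
    unfold C0. rewrite Cnorm_real, Rabs_R0, pow_i by lia. lra.
  - assert (Hx : 0 < Cnorm x) by (pose proof (Cnorm_ge0 x); lra).
    assert (Hxa : 0 < Cnorm x ^ a) by (apply pow_lt; auto).
    assert (Hp : Cpow x a <> C0).
    { intro P. assert (Cnorm (Cpow x a) = 0) by (rewrite P; unfold C0; rewrite Cnorm_real; apply Rabs_R0).
      rewrite Cnorm_pow in H. lra. }
    assert (Hs : Cnorm (Cdiv (F x y) (Cpow x a)) <= N).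
    { apply Hub. exists x, y. split; auto. split; auto. intro P; subst x. apply E.
      unfold C0; rewrite Cnorm_real; apply Rabs_R0. }
    rewrite Cnorm_div, Cnorm_pow in Hs by auto.
    apply Rmult_le_reg_r with (/ Cnorm x ^ a). apply Rinv_0_lt_compat; auto.
    rewrite Rmult_assoc, Rinv_r by lra. rewrite Rmult_1_r. exact Hs.
Qed.

Lemma inU_exp rho r z y : 0 < rho -> 0 < r -> inUt rho r z y -> inU rho r (Cexp z) (Cexp y).
Proof.
  intros Hrho Hr [H1 H2]. unfold inU. rewrite !Cnorm_exp.
  rewrite <- (exp_ln rho), <- (exp_ln r) by auto. split; apply exp_increasing; auto.
Qed.

Lemma boundF_exp rho r a F N z y : 0 < rho -> 0 < r -> (1 <= a)%nat ->
  divisible_by_xa rho r a F -> is_normR rho r a F N -> inUt rho r z y ->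
  Cnorm (F (Cexp z) (Cexp y)) <= N * exp (INR a * Cre z) /\
  Cnorm (F (Cexp z) (Cexp y)) <= N * rho ^ a.
Proof.
  intros Hrho Hr Ha Hd HN Hzy.
  pose proof (boundF rho r a F N Ha Hd HN _ _ (inU_exp rho r z y Hrho Hr Hzy)) as B.
  rewrite Cnorm_exp in B. pose proof (N_nonneg _ _ _ _ _ Hrho Hr HN).
  split.
  - rewrite exp_INR_mul. exact B.
  - eapply Rle_trans; [apply B|]. apply Rmult_le_compat_l; auto.
    apply pow_incr. split; [left; apply exp_pos|].
    destruct Hzy as [H1 _]. rewrite <- (exp_ln rho) by auto. left; apply exp_increasing; auto.
Qed.

Lemma rot lam theta : lam <> C0 ->
  Cnorm (Cscale (- / Cnorm lam) lam) = 1 /\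
  Cdiv theta lam = Cscale (- / Cnorm lam) (Cdiv theta (Cscale (- / Cnorm lam) lam)).
Proof.
  intro Hl. pose proof (Cnorm_pos lam Hl) as Hp. split.
  - rewrite Cnorm_scale, Rabs_Ropp, Rabs_Rinv by lra. rewrite Rabs_right by lra. field. lra.
  - pose proof (Cnorm_sq lam) as Hs.
    destruct lam as [p q]. destruct theta as [u v].
    unfold Cdiv, Cmul, Cinv, Cscale. cbn [Cre Cim] in *.
    set (n := Cnorm {| Cre := p; Cim := q |}) in *.
    assert (Hn : n <> 0) by lra.
    assert (E1 : (- / n * p) ^ 2 + (- / n * q) ^ 2 = 1).
    { replace ((- / n * p) ^ 2 + (- / n * q) ^ 2) with ((p ^ 2 + q ^ 2) / (n * n)) by (field; auto).
      rewrite <- Hs. field. auto. }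
    rewrite E1. rewrite <- Hs. f_equal; field; auto.
Qed.

Lemma cos_lt_abs phi d : Rabs phi < d -> d <= PI -> cos d < cos phi.
Proof.
  intros H1 H2. assert (cos phi = cos (Rabs phi)).
  { unfold Rabs; destruct Rcase_abs; [rewrite cos_neg|]; reflexivity. }
  rewrite H. apply cos_decreasing_1; try lra; pose proof (Rabs_pos phi); lra.
Qed.

Lemma decrease lam theta q c delta : lam <> C0 -> Cnorm theta = 1 ->
  arg_lt (Cdiv theta (Cscale (- / Cnorm lam) lam)) delta ->
  0 <= c < 1 -> 0 < delta < acos c -> Cnorm q <= c ->
  Cre (Cmul (Cdiv theta lam) (Cadd Defs.C1 q)) < 0.
Proof.
  intros Hl Ht [Hu0 [phi0 [Hphi Hu]]] Hc Hd Hq.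
  destruct (rot lam theta Hl) as [Hv E]. rewrite E.
  set (vt := Cscale (- / Cnorm lam) lam) in *.
  set (u := Cdiv theta vt) in *.
  assert (Hvt : vt <> C0) by (intro P; rewrite P in Hv; unfold C0 in Hv; rewrite Cnorm_real, Rabs_R0 in Hv; lra).
  assert (Hnu : Cnorm u = 1) by (unfold u; rewrite Cnorm_div, Ht, Hv by auto; field).
  rewrite Hnu in Hu.
  assert (Hre : Cre u = cos phi0) by (rewrite Hu; simpl; ring).
  assert (Him : Cim u = sin phi0) by (rewrite Hu; simpl; ring).
  pose proof (acos_bound c) as [_ Hac].
  assert (Hcd : c < cos delta).
  { rewrite <- (cos_acos c) at 1 by lra. apply cos_decreasing_1; lra. }
  assert (Hcp : cos delta < cos phi0) by (apply cos_lt_abs; [apply Rabs_def1; lra| lra]).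
  assert (Huq : Rabs (Cre (Cmul u q)) <= c).
  { eapply Rle_trans; [apply Cre_le|]. rewrite Cnorm_mul, Hnu. lra. }
  assert (Hlp : 0 < / Cnorm lam) by (apply Rinv_0_lt_compat, Cnorm_pos; auto).
  replace (Cre (Cmul (Cscale (- / Cnorm lam) u) (Cadd Defs.C1 q)))
    with (- / Cnorm lam * (Cre u + Cre (Cmul u q))) by (unfold Cmul, Cscale, Cadd, Defs.C1; simpl; ring).
  rewrite Hre. assert (- c <= Cre (Cmul u q)) by (unfold Rabs in Huq; destruct Rcase_abs in Huq; lra).
  assert (0 < cos phi0 + Cre (Cmul u q)) by lra.
  nra.
Qed.


Lemma Cnorm_triang u v : Cnorm (Cadd u v) <= Cnorm u + Cnorm v.
Proof.
  pose proof (Cnorm_ge0 u). pose proof (Cnorm_ge0 v). pose proof (Cnorm_ge0 (Cadd u v)).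
  apply Rsqr_incr_0_var; [|lra]. unfold Rsqr.
  rewrite Cnorm_sq. pose proof (Cnorm_sq u). pose proof (Cnorm_sq v).
  pose proof (CS (Cre u) (Cim u) (Cre v) (Cim v)) as H5. fold (Cnorm u) in H5. fold (Cnorm v) in H5.
  cbn [Cadd Cre Cim]. nra.
Qed.

Lemma lip_deriv f f' : (forall x, derivable_pt_lim f x (f' x)) -> (forall x, Rabs (f' x) <= 1) ->
  forall x y, Rabs (f y - f x) <= Rabs (y - x).
Proof.
  intros Hd Hb.
  assert (W : forall x y, x <= y -> Rabs (f y - f x) <= Rabs (y - x)).
  { intros x y Hxy. destruct (mvt_within f f' x y Hxy) as [c [Hc E]].
    - intros; apply Hd.
    - intros z _ eps Heps. destruct (cont_eps f z (f' z) (Hd z) eps Heps) as [d [Hd0 Hd1]].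
      exists d; split; auto.
    - rewrite E, Rabs_mult. rewrite <- (Rmult_1_l (Rabs (y - x))) at 2.
      apply Rmult_le_compat_r; [apply Rabs_pos| apply Hb]. }
  intros x y. destruct (Rle_dec x y); [apply W; lra|].
  rewrite Rabs_minus_sym, (Rabs_minus_sym y). apply W; lra.
Qed.

Lemma cos_lip x y : Rabs (cos y - cos x) <= Rabs (y - x).
Proof.
  apply (lip_deriv cos (fun x => - sin x)). apply derivable_pt_lim_cos.
  intro z. rewrite Rabs_Ropp. apply Rabs_le. apply SIN_bound.
Qed.
Lemma sin_lip x y : Rabs (sin y - sin x) <= Rabs (y - x).
Proof.
  apply (lip_deriv sin cos). apply derivable_pt_lim_sin.
  intro z. apply Rabs_le. apply COS_bound.
Qed.

Lemma Cexp_cont z0 : forall eps, 0 < eps -> exists d, 0 < d /\ forall z,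
  Rabs (Cre z - Cre z0) < d -> Rabs (Cim z - Cim z0) < d -> Cnorm (Csub (Cexp z) (Cexp z0)) < eps.
Proof.
  intros eps Heps.
  destruct (cont_eps exp (Cre z0) (exp (Cre z0)) (derivable_pt_lim_exp _) (eps / 8)) as [d1 [Hd1 Hd1']]; [lra|].
  set (E := exp (Cre z0)). assert (HE : 0 < E) by apply exp_pos.
  assert (Hd2 : 0 < eps / (8 * E)) by (apply Rdiv_lt_0_compat; lra).
  exists (Rmin d1 (eps / (8 * E))). split; [apply Rmin_pos; auto|]. intros z H1 H2.
  assert (X1 : Rabs (exp (Cre z) - E) < eps / 8) by (apply Hd1'; eapply Rlt_le_trans; [apply H1| apply Rmin_l]).
  assert (X2 : Rabs (Cim z - Cim z0) < eps / (8 * E)) by (eapply Rlt_le_trans; [apply H2| apply Rmin_r]).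
  assert (X3 : E * Rabs (Cim z - Cim z0) <= eps / 8).
  { apply Rle_trans with (E * (eps / (8 * E))); [apply Rmult_le_compat_l; lra|]. right; field; lra. }
  eapply Rle_lt_trans; [apply Cnorm_le_sum|].
  unfold Cexp, Csub, Cadd, Copp; cbn [Cre Cim]. fold E.
  replace (exp (Cre z) * cos (Cim z) + - (E * cos (Cim z0)))
    with ((exp (Cre z) - E) * cos (Cim z) + E * (cos (Cim z) - cos (Cim z0))) by ring.
  replace (exp (Cre z) * sin (Cim z) + - (E * sin (Cim z0)))
    with ((exp (Cre z) - E) * sin (Cim z) + E * (sin (Cim z) - sin (Cim z0))) by ring.
  assert (C1' : Rabs ((exp (Cre z) - E) * cos (Cim z) + E * (cos (Cim z) - cos (Cim z0))) <= eps / 8 + eps / 8).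
  { eapply Rle_trans; [apply Rabs_triang|]. rewrite !Rabs_mult, (Rabs_right E) by lra.
    pose proof (cos_lip (Cim z0) (Cim z)). pose proof (Rabs_pos (exp (Cre z) - E)).
    assert (Rabs (cos (Cim z)) <= 1) by (apply Rabs_le; apply COS_bound).
    assert (E * Rabs (cos (Cim z) - cos (Cim z0)) <= E * Rabs (Cim z - Cim z0)) by (apply Rmult_le_compat_l; lra).
    nra. }
  assert (C2' : Rabs ((exp (Cre z) - E) * sin (Cim z) + E * (sin (Cim z) - sin (Cim z0))) <= eps / 8 + eps / 8).
  { eapply Rle_trans; [apply Rabs_triang|]. rewrite !Rabs_mult, (Rabs_right E) by lra.
    pose proof (sin_lip (Cim z0) (Cim z)). pose proof (Rabs_pos (exp (Cre z) - E)).
    assert (Rabs (sin (Cim z)) <= 1) by (apply Rabs_le; apply SIN_bound).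
    assert (E * Rabs (sin (Cim z) - sin (Cim z0)) <= E * Rabs (Cim z - Cim z0)) by (apply Rmult_le_compat_l; lra).
    nra. }
  lra.
Qed.


Definition zt z0 theta t := Cadd z0 (Cscale t theta).
Definition gfun lam (F : Cx -> Cx -> Cx) z0 theta t y :=
  Cmul (Cdiv theta lam) (Cadd Defs.C1 (F (Cexp (zt z0 theta t)) (Cexp y))).
Definition Gf lam F rho r z0 theta t y :=
  if Rlt_dec (Cre (zt z0 theta t)) (ln rho) then
    if Rlt_dec (Cre y) (ln r) then gfun lam F z0 theta t y else C0
  else C0.

Lemma Gf_eq lam F rho r z0 theta t y : inUt rho r (zt z0 theta t) y ->
  Gf lam F rho r z0 theta t y = gfun lam F z0 theta t y.
Proof.
  intros [H1 H2]. unfold Gf. destruct (Rlt_dec _ _); [|contradiction].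
  destruct (Rlt_dec _ _); [reflexivity|contradiction].
Qed.

Lemma pr_le b u : Rabs (pr b u) <= Cnorm u.
Proof. destruct b; [apply Cre_le| apply Cim_le]. Qed.

Lemma pr_diff b q A B' :
  pr b (Cmul q (Cadd Defs.C1 A)) - pr b (Cmul q (Cadd Defs.C1 B')) = pr b (Cmul q (Csub A B')).
Proof. destruct b; unfold Csub, Cmul, Cadd, Copp, Defs.C1, pr; cbn [Cre Cim]; ring. Qed.

Lemma Cnorm_ql lam theta : lam <> C0 -> Cnorm theta = 1 -> Cnorm (Cdiv theta lam) = / Cnorm lam.
Proof. intros Hl Ht. rewrite Cnorm_div, Ht by auto. unfold Rdiv. ring. Qed.

Lemma Cnorm_C1 : Cnorm Defs.C1 = 1.
Proof. unfold Defs.C1. rewrite Cnorm_real. apply Rabs_R1. Qed.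

Lemma zt_re z0 theta t : Cre (zt z0 theta t) = Cre z0 + t * Cre theta.
Proof. reflexivity. Qed.

Lemma Gf_loc lam F rho r z0 theta t y :
  0 < rho -> 0 < r -> lam <> C0 -> Cnorm theta = 1 -> holo_on_U rho r F ->
  inUt rho r (zt z0 theta t) y -> LocCont (Gf lam F rho r z0 theta) t y.
Proof.
  intros Hrho Hr Hl Ht Hholo Hin eps Heps.
  pose proof (Cnorm_pos lam Hl) as Hlp.
  destruct (Hholo _ _ (inU_exp rho r _ _ Hrho Hr Hin)) as [_ [_ Hc]].
  destruct (Hc (eps * Cnorm lam)) as [d' [Hd' Hd'']]; [nra|].
  destruct (Cexp_cont (zt z0 theta t) d' Hd') as [dz [Hdz Hdz']].
  destruct (Cexp_cont y d' Hd') as [dy [Hdy Hdy']].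
  destruct Hin as [Hin1 Hin2].
  set (mz := ln rho - Cre (zt z0 theta t)). set (my := ln r - Cre y).
  assert (Hmz : 0 < mz) by (unfold mz; lra). assert (Hmy : 0 < my) by (unfold my; lra).
  set (d := Rmin (Rmin dz dy) (Rmin mz my)).
  assert (Hd : 0 < d) by (unfold d; repeat apply Rmin_pos; auto).
  assert (D1 : d <= dz) by (unfold d; eapply Rle_trans; [apply Rmin_l| apply Rmin_l]).
  assert (D2 : d <= dy) by (unfold d; eapply Rle_trans; [apply Rmin_l| apply Rmin_r]).
  assert (D3 : d <= mz) by (unfold d; eapply Rle_trans; [apply Rmin_r| apply Rmin_l]).
  assert (D4 : d <= my) by (unfold d; eapply Rle_trans; [apply Rmin_r| apply Rmin_r]).
  exists d. split; auto. intros s y' Hs Hy' b.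
  assert (Zb : forall b', Rabs (pr b' (zt z0 theta s) - pr b' (zt z0 theta t)) < d).
  { intro b'. replace (pr b' (zt z0 theta s) - pr b' (zt z0 theta t)) with ((s - t) * pr b' theta)
      by (destruct b'; unfold zt; cbn [pr Cadd Cscale Cre Cim]; ring).
    rewrite Rabs_mult. pose proof (pr_le b' theta). rewrite Ht in H.
    pose proof (Rabs_pos (pr b' theta)). pose proof (Rabs_pos (s - t)). nra. }
  assert (In' : inUt rho r (zt z0 theta s) y').
  { split.
    - pose proof (Zb true) as Z. cbn [pr] in Z. apply Rabs_def2 in Z. destruct Z. unfold mz in D3. lra.
    - pose proof (Hy' true) as Z. cbn [pr] in Z. apply Rabs_def2 in Z. destruct Z. unfold my in D4. lra. }
  rewrite !Gf_eq by (auto; split; auto). unfold gfun. rewrite pr_diff.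
  eapply Rle_trans; [apply pr_le|]. rewrite Cnorm_mul, Cnorm_ql by auto.
  assert (HF : Cnorm (Csub (F (Cexp (zt z0 theta s)) (Cexp y')) (F (Cexp (zt z0 theta t)) (Cexp y))) < eps * Cnorm lam).
  { apply Hd''.
    - apply Hdz'; eapply Rlt_le_trans; [apply (Zb true)| lra| apply (Zb false)| lra].
    - apply Hdy'; eapply Rlt_le_trans; [apply (Hy' true)| lra| apply (Hy' false)| lra]. }
  apply Rmult_le_reg_l with (Cnorm lam); auto.
  rewrite <- Rmult_assoc, Rinv_r by lra. lra.
Qed.

Lemma lift_deriv lam F rho r z0 w0 theta w T t : lift_on lam F rho r z0 w0 theta w T -> 0 < t < T ->
  Cderiv w t (gfun lam F z0 theta t (w t)).
Proof. intros [_ [_ [_ [_ H]]]] Ht. apply H; auto. Qed.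

Lemma lift_decr lam F rho r N a delta z0 w0 theta w T :
  0 < rho -> 0 < r -> (1 <= a)%nat -> lam <> C0 ->
  divisible_by_xa rho r a F -> is_normR rho r a F N -> N * rho ^ a < 1 ->
  0 < delta < acos (N * rho ^ a) ->
  Cnorm theta = 1 -> arg_lt (Cdiv theta (Cscale (- / Cnorm lam) lam)) delta ->
  lift_on lam F rho r z0 w0 theta w T ->
  forall s t, 0 <= s < t -> t <= T -> Cre (w t) < Cre (w s).
Proof.
  intros Hrho Hr Ha Hl Hd HN HNr Hdel Ht Harg Hlift s t Hst HtT.
  assert (HN0 : 0 <= N * rho ^ a).
  { apply Rmult_le_pos. apply (N_nonneg _ _ _ _ _ Hrho Hr HN). apply pow_le; lra. }
  destruct (mvt_within (fun x => Cre (w x)) (fun x => Cre (gfun lam F z0 theta x (w x))) s t)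
    as [c [Hc E]]; [lra| | |].
  - intros x Hx. apply (lift_deriv lam F rho r z0 w0 theta w T x Hlift). lra.
  - intros x Hx eps Heps. destruct Hlift as [_ [_ [_ [HC _]]]].
    destruct (HC x ltac:(lra) eps Heps) as [d [Hd0 Hd1]]. exists d; split; auto.
    intros y Hy Hyx. eapply Rle_lt_trans; [|apply (Hd1 y ltac:(lra) Hyx)].
    apply (Cre_le (Csub (w y) (w x))).
  - assert (Hin : inUt rho r (zt z0 theta c) (w c)).
    { destruct Hlift as [_ [_ [HU _]]]. apply HU. lra. }
    destruct (boundF_exp rho r a F N _ _ Hrho Hr Ha Hd HN Hin) as [_ B2].
    assert (Hneg : Cre (gfun lam F z0 theta c (w c)) < 0).
    { apply (decrease lam theta _ (N * rho ^ a) delta); auto. }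
    assert (Cre (gfun lam F z0 theta c (w c)) * (t - s) < 0) by (apply Rmult_neg_pos; lra).
    lra.
Qed.

Lemma exp_le' x y : x <= y -> exp x <= exp y.
Proof. intro H. destruct (Req_dec x y) as [E|E]; [subst; lra| left; apply exp_increasing; lra]. Qed.

Lemma deriv_shift f x l c k : derivable_pt_lim f x l ->
  derivable_pt_lim (fun s => f s + - c + - (s * k)) x (l - k).
Proof.
  intros H eps Heps. destruct (H eps Heps) as [del Hdel]. exists del. intros h Hh Hh'.
  replace ((f (x + h) + - c + - ((x + h) * k) - (f x + - c + - (x * k))) / h - (l - k))
    with ((f (x + h) - f x) / h - l) by (field; auto).
  apply Hdel; auto.
Qed.

Lemma est lam F rho r N a z0 w0 theta w T t :
  0 < rho -> 0 < r -> (1 <= a)%nat -> lam <> C0 ->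
  divisible_by_xa rho r a F -> is_normR rho r a F N ->
  Cnorm theta = 1 -> lift_on lam F rho r z0 w0 theta w T -> 0 <= t <= T ->
  let err := Cnorm (Csub (Csub (w t) w0) (Cscale t (Cdiv theta lam))) in
  (Cre theta <> 0 ->
     err <= exp (INR a * Cre z0) / (Rabs (Cnorm lam * Cre theta) * INR a)
            * N * Rabs (1 - exp (INR a * t * Cre theta))) /\
  (Cre theta = 0 -> err <= exp (INR a * Cre z0) / Cnorm lam * t * N).
Proof.
  intros Hrho Hr Ha Hl Hd HN Ht Hlift Htt err.
  pose proof (Cnorm_pos lam Hl) as Hlp.
  pose proof (N_nonneg _ _ _ _ _ Hrho Hr HN) as HN0.
  set (ql := Cdiv theta lam).
  set (D := fun s => Csub (Csub (w s) w0) (Cscale s ql)).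
  set (Dd := fun s => Cmul ql (F (Cexp (zt z0 theta s)) (Cexp (w s)))).
  set (A := N * exp (INR a * Cre z0) / Cnorm lam).
  assert (HA : 0 <= A).
  { unfold A. apply Rmult_le_pos; [apply Rmult_le_pos; [auto| left; apply exp_pos]|].
    left; apply Rinv_0_lt_compat; auto. }
  set (k := INR a * Cre theta).
  assert (HaR : 1 <= INR a) by (change 1 with (INR 1); apply le_INR; auto).
  destruct Hlift as [HT0 [Hw0 [HU [HC HDer]]]].
  assert (HD0 : D 0 = C0).
  { unfold D. rewrite Hw0. unfold Csub, Cadd, Copp, Cscale, C0; cbn [Cre Cim]. f_equal; ring. }
  assert (HDd : forall s, 0 < s < t -> Cderiv D s (Dd s)).
  { intros s Hs. destruct (HDer s ltac:(lra)) as [H1 H2].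
    split.
    - pose proof (deriv_shift _ _ _ (Cre w0) (Cre ql) H1) as X.
      replace (Cre (Dd s)) with (Cre (Cmul (Cdiv theta lam) (Cadd Defs.C1 (F (Cexp (Cadd z0 (Cscale s theta))) (Cexp (w s))))) - Cre ql)
        by (unfold Dd, ql, zt, Cmul, Cadd, Defs.C1; cbn [Cre Cim]; ring).
      exact X.
    - pose proof (deriv_shift _ _ _ (Cim w0) (Cim ql) H2) as X.
      replace (Cim (Dd s)) with (Cim (Cmul (Cdiv theta lam) (Cadd Defs.C1 (F (Cexp (Cadd z0 (Cscale s theta))) (Cexp (w s))))) - Cim ql)
        by (unfold Dd, ql, zt, Cmul, Cadd, Defs.C1; cbn [Cre Cim]; ring).
      exact X. }
  assert (Hql : Cnorm ql = / Cnorm lam) by (apply Cnorm_ql; auto).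
  assert (HCD : forall s, 0 <= s <= t -> forall eps, 0 < eps -> exists d, 0 < d /\
      forall y, 0 <= y <= t -> Rabs (y - s) < d -> Cnorm (Csub (D y) (D s)) < eps).
  { intros s Hs eps Heps. destruct (HC s ltac:(lra) (eps / 2)) as [d [Hd0 Hd1]]; [lra|].
    set (M := Cnorm ql + 1).
    assert (HM : 0 < M) by (unfold M; pose proof (Cnorm_ge0 ql); lra).
    exists (Rmin d (eps / 2 / M)). split; [apply Rmin_pos; [auto| apply Rdiv_lt_0_compat; lra]|].
    intros y Hy Hys.
    assert (E : Csub (D y) (D s) = Cadd (Csub (w y) (w s)) (Cscale (- (y - s)) ql)).
    { unfold D, Csub, Cadd, Copp, Cscale; cbn [Cre Cim]. f_equal; ring. }
    rewrite E. eapply Rle_lt_trans; [apply Cnorm_triang|].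
    assert (X1 := Hd1 y ltac:(lra) ltac:(eapply Rlt_le_trans; [apply Hys| apply Rmin_l])).
    rewrite Cnorm_scale, Rabs_Ropp.
    assert (X2 : Rabs (y - s) < eps / 2 / M) by (eapply Rlt_le_trans; [apply Hys| apply Rmin_r]).
    assert (X3 : Rabs (y - s) * Cnorm ql <= eps / 2 / M * M).
    { apply Rmult_le_compat; [apply Rabs_pos| apply Cnorm_ge0| lra| unfold M; lra]. }
    replace (eps / 2 / M * M) with (eps / 2) in X3 by (field; lra). lra. }
  assert (Hb : forall s, 0 <= s <= t -> Cnorm (Dd s) <= A * exp (k * s)).
  { intros s Hs. unfold Dd. rewrite Cnorm_mul, Hql.
    assert (Hin : inUt rho r (zt z0 theta s) (w s)) by (apply HU; lra).
    destruct (boundF_exp rho r a F N _ _ Hrho Hr Ha Hd HN Hin) as [B1 _].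
    rewrite zt_re in B1.
    replace (INR a * (Cre z0 + s * Cre theta)) with (INR a * Cre z0 + k * s) in B1 by (unfold k; ring).
    rewrite exp_plus in B1.
    replace (A * exp (k * s)) with (/ Cnorm lam * (N * exp (INR a * Cre z0) * exp (k * s)))
      by (unfold A; field; lra).
    apply Rmult_le_compat_l; [left; apply Rinv_0_lt_compat; auto|]. lra. }
  split.
  - intro Hr0.
    assert (Hk : k <> 0) by (unfold k; intro; apply Hr0; nra).
    assert (Bt : 0 <= A * ((exp (k * t) - 1) / k)).
    { apply Rmult_le_pos; auto.
      destruct (Rlt_dec 0 k).
      - unfold Rdiv; apply Rmult_le_pos; [|left; apply Rinv_0_lt_compat; auto].
        assert (exp 0 <= exp (k * t)) by (apply exp_le'; nra). rewrite exp_0 in H; lra.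
      - assert (k < 0) by lra. unfold Rdiv. replace ((exp (k * t) - 1) * / k) with ((1 - exp (k * t)) * / (- k)) by (field; lra).
        apply Rmult_le_pos; [|left; apply Rinv_0_lt_compat; lra].
        assert (exp (k * t) <= exp 0) by (apply exp_le'; nra). rewrite exp_0 in H0; lra. }
    pose proof (vec_bound D Dd (fun s => A * ((exp (k * s) - 1) / k)) (fun s => A * exp (k * s)) t
        (proj1 Htt) HD0 ltac:(simpl; replace (k * 0) with 0 by ring; rewrite exp_0; field; auto)
        Bt HDd HCD (fun s => Der.dB1 A k s Hk) Hb) as V.
    unfold err. fold ql. change (Cnorm (D t) <= exp (INR a * Cre z0) / (Rabs (Cnorm lam * Cre theta) * INR a)
            * N * Rabs (1 - exp (INR a * t * Cre theta))).
    eapply Rle_trans; [apply V|]. right.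
    replace (INR a * t * Cre theta) with (k * t) by (unfold k; ring).
    rewrite Rabs_mult, (Rabs_right (Cnorm lam)) by lra.
    unfold A.
    destruct (Rlt_dec 0 (Cre theta)).
    + rewrite (Rabs_right (Cre theta)) by lra.
      assert (exp 0 <= exp (k * t)) by (apply exp_le'; unfold k; pose proof (proj1 Htt); apply Rmult_le_pos; [apply Rmult_le_pos|]; lra). rewrite exp_0 in H.
      rewrite Rabs_left1 by lra. unfold k. field. split; [lra|]. split; lra.
    + rewrite (Rabs_left (Cre theta)) by lra.
      assert (exp (k * t) <= exp 0) by (apply exp_le'; unfold k; pose proof (proj1 Htt); assert (0 <= INR a * - Cre theta * t) by (apply Rmult_le_pos; [apply Rmult_le_pos|]; lra); lra). rewrite exp_0 in H.
      rewrite Rabs_right by lra. unfold k. field. split; [lra|]. split; lra.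
  - intro Hr0.
    assert (Hk : k = 0) by (unfold k; rewrite Hr0; ring).
    assert (Hb' : forall s, 0 <= s <= t -> Cnorm (Dd s) <= A).
    { intros s Hs. pose proof (Hb s Hs). rewrite Hk, Rmult_0_l, exp_0, Rmult_1_r in H. exact H. }
    pose proof (vec_bound D Dd (fun s => A * s) (fun _ => A) t
        (proj1 Htt) HD0 ltac:(simpl; ring) ltac:(apply Rmult_le_pos; lra) HDd HCD
        (fun s => Der.dB0 A s) Hb') as V.
    unfold err. fold ql. change (Cnorm (D t) <= exp (INR a * Cre z0) / Cnorm lam * t * N).
    eapply Rle_trans; [apply V|]. right. unfold A. field. lra.
Qed.


Theorem mainTheorem10
  (lam : Cx) (a : nat) (F : Cx -> Cx -> Cx) (rho r N : R)
  (Hlam : lam <> C0) (Ha : (1 <= a)%nat)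
  (Hrho : 0 < rho) (Hr : 0 < r)
  (Hholo : holo_on_U rho r F)
  (Hdiv : divisible_by_xa rho r a F)
  (Hsup : exists M, M < 1 /\ forall x y, inU rho r x y -> Cnorm (F x y) <= M)
  (HN : is_normR rho r a F N)
  (HNrho : N * rho ^ a < 1)
  (delta : R) (Hdelta : 0 < delta < acos (N * rho ^ a)) :
  let vt := Cscale (- / Cnorm lam) lam in
  (* (i) *)
  (forall z0 w0, inUt rho r z0 w0 ->
     is_stability_beam lam F rho r (z0, w0) z0 vt delta) /\
  (* (ii) *)
  (forall z0 w0 theta (w : R -> Cx) T,
     Cnorm theta = 1 ->
     lift_on lam F rho r z0 w0 theta w T ->
     forall t, 0 <= t <= T ->
       let err := Cnorm (Csub (Csub (w t) w0) (Cscale t (Cdiv theta lam))) in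
       (Cre theta <> 0 ->
          err <= exp (INR a * Cre z0) / (Rabs (Cnorm lam * Cre theta) * INR a)
                 * N * Rabs (1 - exp (INR a * t * Cre theta))) /\
       (Cre theta = 0 ->
          err <= exp (INR a * Cre z0) / Cnorm lam * t * N)).
Proof.
  intro vt. split.
  2: { intros z0 w0 theta w T Ht Hl t Htt.
       exact (est lam F rho r N a z0 w0 theta w T t Hrho Hr Ha Hlam Hdiv HN Ht Hl Htt). }
  intros z0 w0 Hz. split; [reflexivity|].
  intros theta Ht Harg. cbn [fst snd]. split.
  2: { intros w T Hl s t Hst HtT.
       exact (lift_decr lam F rho r N a delta z0 w0 theta w T Hrho Hr Ha Hlam Hdiv HN HNrho Hdelta Ht Harg Hl s t Hst HtT). }
  pose proof (Cnorm_pos lam Hlam) as Hlp.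
  assert (HN0 : 0 <= N * rho ^ a).
  { apply Rmult_le_pos. apply (N_nonneg _ _ _ _ _ Hrho Hr HN). apply pow_le; lra. }
  set (G := Gf lam F rho r z0 theta).
  set (K := 2 / Cnorm lam).
  assert (HK0 : 0 <= K) by (unfold K; apply Rmult_le_pos; [lra| left; apply Rinv_0_lt_compat; auto]).
  assert (HK : forall b t y, Rabs (pr b (G t y)) <= K).
  { intros b t y. unfold G, Gf.
    destruct (Rlt_dec _ _) as [h1|h1]; [destruct (Rlt_dec _ _) as [h2|h2]|];
      try (destruct b; unfold C0, pr; cbn [Cre Cim]; rewrite Rabs_R0; exact HK0).
    assert (Hin : inUt rho r (zt z0 theta t) y) by (split; auto).
    destruct (boundF_exp rho r a F N _ _ Hrho Hr Ha Hdiv HN Hin) as [_ B2].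
    eapply Rle_trans; [apply pr_le|]. unfold gfun. rewrite Cnorm_mul, Cnorm_ql by auto.
    pose proof (Cnorm_triang Defs.C1 (F (Cexp (zt z0 theta t)) (Cexp y))) as T3.
    rewrite Cnorm_C1 in T3. unfold K. unfold Rdiv.
    rewrite Rmult_comm. apply Rmult_le_compat_r; [left; apply Rinv_0_lt_compat; auto| lra]. }
  assert (HRe : forall t y, Cre (G t y) <= 0).
  { intros t y. unfold G, Gf.
    destruct (Rlt_dec _ _) as [h1|h1]; [destruct (Rlt_dec _ _) as [h2|h2]|];
      try (unfold C0; cbn [Cre]; lra).
    assert (Hin : inUt rho r (zt z0 theta t) y) by (split; auto).
    destruct (boundF_exp rho r a F N _ _ Hrho Hr Ha Hdiv HN Hin) as [_ B2].
    left. apply (decrease lam theta _ (N * rho ^ a) delta); auto. }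
  destruct (euler_exists G K w0 HK0 HK HRe) as [w [Hw0 [HwRe [HwLip HwD]]]].
  exists w. intros T HT HzT.
  assert (Hzt : forall t, 0 <= t <= T -> Cre (zt z0 theta t) < ln rho).
  { intros t Htt. rewrite zt_re. simpl in HzT. destruct Hz as [Hz1 _].
    destruct (Rle_dec 0 (Cre theta)).
    - assert (t * Cre theta <= T * Cre theta) by (apply Rmult_le_compat_r; lra). lra.
    - assert (t * Cre theta <= 0) by (assert (0 <= t * - Cre theta) by (apply Rmult_le_pos; lra); lra). lra. }
  assert (Hin : forall t, 0 <= t <= T -> inUt rho r (zt z0 theta t) (w t)).
  { intros t Htt. split; [apply Hzt; auto|]. destruct Hz as [_ Hz2]. pose proof (HwRe t). lra. }
  assert (Lip : forall b s t, 0 <= s -> 0 <= t -> Rabs (pr b (w s) - pr b (w t)) <= K * Rabs (s - t)).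
  { intros b s t Hs Ht'. destruct (Rle_dec t s).
    - rewrite (Rabs_right (s - t)) by lra. apply HwLip; lra.
    - rewrite Rabs_minus_sym, (Rabs_left (s - t)) by lra.
      replace (- (s - t)) with (t - s) by ring. apply HwLip; lra. }
  split; [exact HT|]. split; [exact Hw0|]. split; [exact Hin|]. split.
  - intros t Htt eps Heps. exists (eps / (2 * K + 1)).
    split; [apply Rdiv_lt_0_compat; lra|]. intros s Hs Hst.
    eapply Rle_lt_trans; [apply Cnorm_le_sum|].
    pose proof (Lip true s t ltac:(lra) ltac:(lra)) as L1. pose proof (Lip false s t ltac:(lra) ltac:(lra)) as L2.
    cbn [pr] in L1, L2.
    assert (K * Rabs (s - t) <= K * (eps / (2 * K + 1))) by (apply Rmult_le_compat_l; lra).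
    assert (K * (eps / (2 * K + 1)) * 2 < eps).
    { replace (K * (eps / (2 * K + 1)) * 2) with (eps * (2 * K / (2 * K + 1))) by (field; lra).
      assert (2 * K / (2 * K + 1) < 1).
      { apply Rmult_lt_reg_r with (2 * K + 1); [lra|]. replace (2 * K / (2 * K + 1) * (2 * K + 1)) with (2 * K) by (field; lra). lra. }
      nra. }
    change (Rabs (Cre (w s) - Cre (w t)) + Rabs (Cim (w s) - Cim (w t)) < eps). lra.
  - intros t Htt.
    assert (HLC : LocCont G t (w t)).
    { apply Gf_loc; auto. apply Hin. lra. }
    pose proof (HwD t (proj1 Htt) HLC) as Dv.
    unfold G in Dv. rewrite Gf_eq in Dv by (apply Hin; lra).
    split; [exact (Dv true) | exact (Dv false)].
Qed.
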